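(* Let $A$ be a sub-tree of $T$ and $I\subseteq\mathcal{I}_A$. On $[0,d(r_A)]$, the function $f_A^I$ has at most $|V_A^I|$ corner points and at most $|V_A^I|+1$ maximal linear pieces. Moreover, the optimal sets associated with the successive linear pieces (from left to right) form a chain with respect to inclusion, each one containing the previous ones; equivalently, the matryoshka $\mathcal{M}_A^I$ is totally ordered by inclusion and has at most $|V_A^I|+1$ elements.
   Context: Setting. $T$ is a finite tree rooted at $r_T$, node set $V_T$; every edge $e$ has weight $w_e\ge 0$. Every node $v$ has a probability $\pi_v\in(0,1]$ and a prize $p_v\in\mathbb{R}$. $d(v)$ is the total weight of the path from $r_T$ to $v$. A random set $\omega\subseteq V_T$ contains each node $v$ independently with probability $\pi_v$. For $S\subseteq V_T$, $P(S)=1-\prod_{s\in S}(1-\pi_s)$ ($P(\emptyset)=0$). For a node $a$, the sub-tree $A$ rooted at $r_A=a$ consists of $a$ and all its descendants, with node set $V_A$; if $a$ has children $c_1,\dots,c_m$, then $A_i$ ($1\le i\le m$) is the sub-tree rooted at $c_i$, $A_0$ is the sub-tree consisting of the single node $r_A$, $\mathcal{I}_A=\{0,1,\dots,m\}$, and $V_A^I=\bigcup_{i\in I}V_{A_i}$ for $I\subseteq\mathcal{I}_A$. For $Q\subseteq V_T$, $W(Q)$ is the total weight of the edges lying on at least one path from $r_T$ to a node of $Q$. For $S\subseteq V_A$ and $x\le d(r_A)$ the expected profit is $G(S,x)=\sum_{s\in S}p_s\pi_s-\mathbb{E}[W(S\cap\omega)]+x\,P(S)$. Characteristic function. For a sub-tree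 $A$, $I\subseteq\mathcal{I}_A$ and $x\in[0,d(r_A)]$, $f_A^I(x)=\max_{S\subseteq V_A^I}G(S,x)$. A set $S\subseteq V_A^I$ with $G(S,x)=f_A^I(x)$ is an optimal set (for $f_A^I$) at $x$. The matryoshka $\mathcal{M}_A^I$ is the family of all $S\subseteq V_A^I$ such that for some $x\in[0,d(r_A)]$, $S$ is an optimal set at $x$ and no proper superset of $S$ contained in $V_A^I$ is optimal at $x$. *)

(* Defs.v *)
(* A rooted tree on a finite type V is given by a root r and
   a parent map par (par r = r, every node reaches r by iterating par).
   The edge (par u, u) of a non-root node u carries the weight w u. *)
From HB Require Import structures.
From mathcomp Require Import all_boot all_order all_algebra.
Set Implicit Arguments. Unset Strict Implicit. Unset Printing Implicit Defensive.
Import Order.TTheory GRing.Theory Num.Theory.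
Local Open Scope ring_scope.

Section TreeDefs.
Context {R : realFieldType} {V : finType}.

Definition is_rooted_tree (r : V) (par : V -> V) : Prop :=
  par r = r /\ forall v, exists k, iter k par v = r.

Definition anc (par : V -> V) (u v : V) : bool :=
  [exists k : 'I_#|V|.+1, iter k par v == u].

Definition dist (r : V) (par : V -> V) (w : V -> R) (v : V) : R :=
  \sum_(u | (u != r) && anc par u v) w u.

Definition Wt (r : V) (par : V -> V) (w : V -> R) (Q : {set V}) : R :=
  \sum_(u | (u != r) && [exists q in Q, anc par u q]) w u.

(* probability that the random set omega equals om *)
Definition probset (pi : V -> R) (om : {set V}) : R :=
  (\prod_(v in om) pi v) * \prod_(v in ~: om) (1 - pi v).

Definition EW (r : V) (par : V -> V) (w pi : V -> R) (S : {set V}) : R :=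
  \sum_(om : {set V}) probset pi om * Wt r par w (S :&: om).

Definition PS (pi : V -> R) (S : {set V}) : R := 1 - \prod_(s in S) (1 - pi s).

Definition G (r : V) (par : V -> V) (w pi p : V -> R) (S : {set V}) (x : R) : R :=
  \sum_(s in S) p s * pi s - EW r par w pi S + x * PS pi S.

Definition desc (par : V -> V) (a : V) : {set V} := [set v | anc par a v].

Definition children (r : V) (par : V -> V) (a : V) : {set V} :=
  [set c | (par c == a) && (c != r)].

(* Index sets: I_A is encoded as option V, None standing for index 0
   (the single-node sub-tree A_0 = {a}) and Some c for the sub-tree
   rooted at the child c. V_A^I: *)
Definition VAI (par : V -> V) (a : V) (I : {set option V}) : {set V} :=
  (if None \in I then [set a] else set0) :|: \bigcup_(c | Some c \in I) desc par c.

Definition fAI (r : V) (par : V -> V) (w pi p : V -> R) (a : V)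
  (I : {set option V}) (x : R) : R :=
  \big[Order.max/G r par w pi p set0 x]_(S : {set V} | S \subset VAI par a I)
     G r par w pi p S x.

Definition optimal (r : V) (par : V -> V) (w pi p : V -> R) (a : V)
  (I : {set option V}) (S : {set V}) (x : R) : Prop :=
  S \subset VAI par a I /\ G r par w pi p S x = fAI r par w pi p a I x.

Definition matryoshka (r : V) (par : V -> V) (w pi p : V -> R) (a : V)
  (I : {set option V}) (S : {set V}) : Prop :=
  S \subset VAI par a I /\
  exists x, 0 <= x <= dist r par w a /\ optimal r par w pi p a I S x /\
    forall S' : {set V}, S \proper S' -> S' \subset VAI par a I ->
      ~ optimal r par w pi p a I S' x.

Definition affine_on (f : R -> R) (b c : R) : Prop :=
  exists alpha beta : R, forall y, b <= y <= c -> f y = alpha + beta * y.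

Definition corner (f : R -> R) (lo hi x : R) : Prop :=
  lo < x < hi /\ ~ (exists e, 0 < e /\ affine_on f (x - e) (x + e)).

End TreeDefs.

(* Main.v *)
Require Import Defs.
From HB Require Import structures.
From mathcomp Require Import all_boot all_order all_algebra.
From mathcomp Require Import ring lra zify.
Set Implicit Arguments. Unset Strict Implicit. Unset Printing Implicit Defensive.
Import Order.TTheory GRing.Theory Num.Theory.
Local Open Scope ring_scope.

Section P5.
Variables (R : realFieldType) (V : finType) (r : V) (par : V -> V) (w pi p : V -> R).
Hypothesis Hw : forall v, 0 <= w v.
Hypothesis Hpi : forall v, 0 < pi v <= 1.
Variables (a : V) (I : {set option V}).
Hypothesis HI : forall c, Some c \in I -> c \in children r par a.

Lemma anc_iter u v k : iter k par v = u -> anc par u v.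
Proof.
move=> H; have hc : fconnect par v u by rewrite -H fconnect_iter.
apply/existsP.
have lt : (findex par v u < #|V|.+1)%N.
  apply: leq_trans (findex_max hc) _; apply: leqW; exact: max_card.
by exists (Ordinal lt); rewrite /= iter_findex.
Qed.

Lemma ancP u v : anc par u v -> exists k, iter k par v = u.
Proof. by case/existsP => k /eqP; exists k. Qed.

Lemma anc_trans u v q : anc par u v -> anc par v q -> anc par u q.
Proof.
move=> /ancP [k1 h1] /ancP [k2 h2]; apply: (@anc_iter _ _ (k1 + k2)).
by rewrite iterD h2.
Qed.

Lemma U_desc : VAI par a I \subset desc par a.
Proof.
rewrite /VAI subUset; apply/andP; split.
  case: ifP => _; last exact: sub0set.
  by rewrite sub1set inE; apply: (@anc_iter _ _ 0).
apply/bigcupsP => c /HI; rewrite inE => /andP [/eqP pc _].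
apply/subsetP => v; rewrite !inE => h; apply: anc_trans h.
by apply: (@anc_iter _ _ 1).
Qed.

Lemma sum_prod_sets (F Gf : V -> R) :
  \sum_(J : {set V}) (\prod_(v in J) F v) * \prod_(v in ~: J) Gf v =
  \prod_v (F v + Gf v).
Proof.
rewrite bigA_distr; apply: eq_big => // J _.
rewrite [RHS](bigID (mem J)) /=; congr (_ * _).
  by apply: eq_bigr => i /= ->.
by apply: eq_big => [i|i]; rewrite ?inE // => /negbTE ->.
Qed.

Lemma probset_ge0 om : 0 <= probset pi om.
Proof.
rewrite /probset; apply: mulr_ge0; apply: prodr_ge0 => v _.
  by case/andP: (Hpi v) => /ltW.
by case/andP: (Hpi v) => _; rewrite subr_ge0.
Qed.

Lemma probset_sum1 : \sum_(om : {set V}) probset pi om = 1.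
Proof.
rewrite /probset sum_prod_sets; apply: big1 => v _.
by rewrite addrC subrK.
Qed.

Lemma sum_empty S :
  \sum_(om : {set V}) probset pi om * (S :&: om == set0)%:R =
  \prod_(s in S) (1 - pi s).
Proof.
transitivity (\sum_(om : {set V})
   (\prod_(v in om) (if v \in S then 0 else pi v)) * \prod_(v in ~: om) (1 - pi v)).
  apply: eq_bigr => om _; rewrite /probset.
  have [h|h] := eqVneq (S :&: om) set0.
    rewrite mulr1; congr (_ * _); apply: eq_bigr => v hv.
    case: ifP => // hS.
    have : v \in S :&: om by rewrite inE hS hv.
    by rewrite h inE.
  case/set0Pn: h => v; rewrite inE => /andP [hS hv].
  by rewrite mulr0 (bigD1 v) //= hS mul0r mul0r.
rewrite sum_prod_sets [RHS]big_mkcond; apply: eq_bigr => v _.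
by case: ifP => _; rewrite ?add0r // addrC subrK.
Qed.

Lemma PS_sum S :
  PS pi S = \sum_(om : {set V}) probset pi om * (S :&: om != set0)%:R.
Proof.
have e : forall b : bool, (~~ b)%:R = 1 - b%:R :> R by case; rewrite ?subrr ?subr0.
under eq_bigr do rewrite e mulrBr mulr1.
by rewrite sumrB probset_sum1 sum_empty.
Qed.

Definition hh (x : R) (Q : {set V}) := Wt r par w Q - x * (Q != set0)%:R.

Lemma EW_PS S x :
  EW r par w pi S - x * PS pi S =
  \sum_(om : {set V}) probset pi om * hh x (S :&: om).
Proof.
rewrite PS_sum /EW mulr_sumr -sumrB; apply: eq_bigr => om _.
by rewrite /hh mulrBr mulrCA.
Qed.

Definition cov (Q : {set V}) u := (u != r) && [exists q in Q, anc par u q].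

Lemma Wt_cov Q : Wt r par w Q = \sum_u (if cov Q u then w u else 0).
Proof. by rewrite /Wt big_mkcond. Qed.

Lemma covU (A B : {set V}) u : cov (A :|: B) u = cov A u || cov B u.
Proof.
rewrite /cov -andb_orr; congr (_ && _).
apply/idP/idP.
  case/existsP=> q /andP []; rewrite inE => /orP [] hq hu; apply/orP; [left|right];
    by apply/existsP; exists q; rewrite hq.
by case/orP=> /existsP [q /andP [hq hu]]; apply/existsP; exists q; rewrite inE hq ?orbT.
Qed.

Lemma covI (A B : {set V}) u : cov (A :&: B) u -> cov A u && cov B u.
Proof.
rewrite /cov => /andP [-> /existsP [q /andP []]]; rewrite inE => /andP [hA hB] hu.
by apply/andP; split; apply/existsP; exists q; rewrite ?hA ?hB.
Qed.

Lemma cov_d (A : {set V}) u : A \subset desc par a -> A != set0 -> u != r -> anc par u a ->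
  cov A u.
Proof.
move=> hA /set0Pn [q hq] hu hua; rewrite /cov hu /=; apply/existsP; exists q.
rewrite hq /=; apply: anc_trans hua _.
by move/subsetP: hA => /(_ q hq); rewrite inE.
Qed.

Lemma cov0 u : cov set0 u = false.
Proof.
rewrite /cov; case: (u != r) => //=; apply/existsP => [[q]]; by rewrite inE.
Qed.

Lemma hh_sub (A B : {set V}) x : A \subset desc par a -> B \subset desc par a ->
  x <= dist r par w a ->
  hh x (A :|: B) + hh x (A :&: B) <= hh x A + hh x B.
Proof.
move=> hA hB hx.
have [->|nA] := eqVneq A set0; first by rewrite set0U set0I addrC.
have [->|nB] := eqVneq B set0; first by rewrite setU0 setI0.
have nU : A :|: B != set0 by rewrite setU_eq0 negb_and nA.
rewrite /hh nA nB nU !Wt_cov.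
have [hI|hI] := eqVneq (A :&: B) set0.
  rewrite hI /=.
  have key : \sum_u (if cov (A :|: B) u then w u else 0) +
     \sum_u (if cov set0 u then w u else 0) + dist r par w a <=
     \sum_u (if cov A u then w u else 0) + \sum_u (if cov B u then w u else 0).
    rewrite /dist [X in _ + X <= _]big_mkcond -!big_split /=; apply: ler_sum => u _.
    rewrite covU cov0 addr0.
    case: (boolP ((u != r) && anc par u a)) => h.
      case/andP: h => h1 h2.
      by rewrite !(cov_d _ _ h1 h2) //= addr0.
    case: (cov A u); case: (cov B u) => /=; rewrite ?addr0 ?add0r //;
      have := Hw u; lra.
  lra.
have key : \sum_u (if cov (A :|: B) u then w u else 0) +
     \sum_u (if cov (A :&: B) u then w u else 0) <=
     \sum_u (if cov A u then w u else 0) + \sum_u (if cov B u then w u else 0).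
  rewrite -!big_split /=; apply: ler_sum => u _.
  rewrite covU; move: (@covI A B u).
  case: (cov A u); case: (cov B u); case: (cov (A :&: B) u) => //= H;
    first [by move/(_ isT): H | have := Hw u; lra].
rewrite /=; lra.
Qed.

Local Notation U := (VAI par a I).
Local Notation GG := (G r par w pi p).
Local Notation ff := (fAI r par w pi p a I).
Local Notation dd := (dist r par w a).
Local Notation opt := (optimal r par w pi p a I).

Definition KK (S : {set V}) := \sum_(s in S) p s * pi s - EW r par w pi S.

Lemma G_aff S x : GG S x = KK S + x * PS pi S.
Proof. by rewrite /G /KK. Qed.

Lemma G_hh S x : GG S x =
  \sum_(s in S) p s * pi s - \sum_(om : {set V}) probset pi om * hh x (S :&: om).
Proof. rewrite -EW_PS /G; first ring. Qed.

Lemma sum_modular (F : V -> R) (A B : {set V}) :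
  \sum_(s in A) F s + \sum_(s in B) F s =
  \sum_(s in A :|: B) F s + \sum_(s in A :&: B) F s.
Proof.
rewrite !(big_mkcond (fun s => s \in _)) -!big_split; apply: eq_bigr => s _.
rewrite !inE; case: (s \in A); case: (s \in B); rewrite /= ?addr0 ?add0r //.

Qed.

Lemma G_super (A B : {set V}) x : A \subset U -> B \subset U -> x <= dd ->
  GG A x + GG B x <= GG (A :|: B) x + GG (A :&: B) x.
Proof.
move=> hA hB hx; rewrite !G_hh.
have hL := sum_modular (fun s => p s * pi s) A B.
have hS : \sum_(om : {set V}) probset pi om * hh x ((A :|: B) :&: om) +
          \sum_(om : {set V}) probset pi om * hh x ((A :&: B) :&: om) <=
          \sum_(om : {set V}) probset pi om * hh x (A :&: om) +
          \sum_(om : {set V}) probset pi om * hh x (B :&: om).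
  rewrite -!big_split /=; apply: ler_sum => om _.
  rewrite -!mulrDr; apply: ler_wpM2l; first exact: probset_ge0.
  have e : A :&: B :&: om = (A :&: om) :&: (B :&: om) by rewrite setIACA setIid.
  rewrite setIUl e; apply: hh_sub => //.
    exact: subset_trans (subsetIl _ _) (subset_trans hA U_desc).
  exact: subset_trans (subsetIl _ _) (subset_trans hB U_desc).
lra.
Qed.

Lemma fAI_ge (T : {set V}) x : T \subset U -> GG T x <= ff x.
Proof. by move=> hT; rewrite /fAI (bigD1 T) //= le_max lexx. Qed.

Lemma fAI_att x : exists2 S : {set V}, S \subset U & ff x = GG S x.
Proof.
rewrite /fAI; apply: (big_ind (fun y => exists2 S : {set V}, S \subset U & y = GG S x)).
- by exists set0; rewrite ?sub0set.
- move=> y1 y2 [S1 h1 ->] [S2 h2 ->].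
  case: (leP (GG S1 x) (GG S2 x)) => h; [exists S2 | exists S1] => //;
    rewrite ?max_r ?max_l // ltW.
- by move=> S hS; exists S.
Qed.

Lemma opt_of (S : {set V}) x : S \subset U -> (forall T : {set V}, T \subset U -> GG T x <= GG S x) ->
  opt S x.
Proof.
move=> hS H; split => //; have [T hT e] := fAI_att x.
by apply: le_anti; rewrite fAI_ge //= e H.
Qed.

Lemma opt_ge (S T : {set V}) x : opt S x -> T \subset U -> GG T x <= GG S x.
Proof. by case=> _ ->; apply: fAI_ge. Qed.

Lemma union_opt A B x : x <= dd -> opt A x -> opt B x -> opt (A :|: B) x.
Proof.
move=> hx oA oB; have [hA _] := oA; have [hB _] := oB.
have hU : A :|: B \subset U by rewrite subUset hA hB.
apply: opt_of => // T hT.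
have h1 := G_super hA hB hx.
have h2 : GG (A :&: B) x <= GG B x.
  by apply: opt_ge oB _; exact: subset_trans (subsetIr _ _) hB.
have h3 := opt_ge oA hT. lra.
Qed.

Definition M x := \bigcup_(T : {set V} | (T \subset U) && (GG T x == ff x)) T.

Lemma M_max (T : {set V}) x : opt T x -> T \subset M x.
Proof. by case=> hT e; apply: bigcup_sup; rewrite hT e eqxx. Qed.

Lemma M_opt x : x <= dd -> opt (M x) x.
Proof.
move=> hx.
have : M x = set0 \/ opt (M x) x.
  rewrite /M; apply: (big_ind (fun X => X = set0 \/ opt X x)).
  - by left.
  - move=> X Y [->|oX] [->|oY].
    + by left; rewrite setU0.
    + by right; rewrite set0U.
    + by right; rewrite setU0.
    + by right; apply: union_opt.
  - by move=> T /andP [hT /eqP e]; right.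
case=> // e; have [T hT eT] := fAI_att x.
have oT : opt T x by [].
have := M_max oT; rewrite e subset0 => /eqP hT0.
by rewrite -hT0.
Qed.

Lemma PS_mono (S T : {set V}) : S \subset T -> PS pi S <= PS pi T.
Proof.
move=> hST; rewrite /PS lerD2l lerN2 (big_setID S) /= (setIidPr hST).
apply: ler_piMr.
  by apply: prodr_ge0 => v _; case/andP: (Hpi v) => _; rewrite subr_ge0.
apply: prodr_ile1 => v _; case/andP: (Hpi v) => h1 h2.
by rewrite subr_ge0 h2 /= gerBl ltW.
Qed.

Lemma chain_step (S1 S2 : {set V}) x1 x2 : x1 <= x2 -> x1 <= dd ->
  opt S1 x1 -> opt S2 x2 -> opt (S1 :|: S2) x2.
Proof.
move=> h12 hx1 o1 o2; have [hS1 _] := o1; have [hS2 _] := o2.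
have hU : S1 :|: S2 \subset U by rewrite subUset hS1 hS2.
apply: opt_of => // T hT.
have h1 := G_super hS1 hS2 hx1.
have h2 : GG (S1 :&: S2) x1 <= GG S1 x1.
  by apply: opt_ge o1 _; exact: subset_trans (subsetIl _ _) hS1.
have h3 := opt_ge o2 hT.
have hP : PS pi S2 <= PS pi (S1 :|: S2) by apply: PS_mono; exact: subsetUr.
have hm : 0 <= (x2 - x1) * (PS pi (S1 :|: S2) - PS pi S2).
  by apply: mulr_ge0; rewrite subr_ge0.
move: h1 h2 h3; rewrite !G_aff; lra.
Qed.

Lemma matr_chain (S1 S2 : {set V}) :
  matryoshka r par w pi p a I S1 -> matryoshka r par w pi p a I S2 ->
  S1 \subset S2 \/ S2 \subset S1.
Proof.
have key : forall (S1 S2 : {set V}) x1 x2, x1 <= x2 -> x1 <= dd ->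
  opt S1 x1 -> opt S2 x2 ->
  (forall S' : {set V}, S2 \proper S' -> S' \subset U -> ~ opt S' x2) ->
  S1 \subset S2.
  move=> T1 T2 x1 x2 h12 hx1 o1 o2 hmax.
  have oU := chain_step h12 hx1 o1 o2.
  have : ~~ (T2 \proper T1 :|: T2).
    apply/negP => hp; apply: (hmax _ hp) => //; by case: oU.
  by rewrite properE subsetUr /= negbK subUset => /andP [].
move=> [_ [x1 [/andP [_ hx1] [o1 m1]]]] [_ [x2 [/andP [_ hx2] [o2 m2]]]].
case: (leP x1 x2) => h.
  by left; apply: (key _ _ x1 x2).
by right; apply: (key _ _ x2 x1) => //; apply: ltW.
Qed.

Lemma matr_count (s : seq {set V}) : uniq s ->
  (forall S, S \in s -> matryoshka r par w pi p a I S) -> (size s <= #|U| + 1)%N.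
Proof.
move=> us hs.
have ui : uniq [seq #|Y| | Y : {set V} <- s].
  rewrite map_inj_in_uniq // => S1 S2 h1 h2 hc.
  case: (matr_chain (hs _ h1) (hs _ h2)) => h.
    by apply/eqP; rewrite eqEcard h hc /=.
  by apply/esym/eqP; rewrite eqEcard h hc /=.
rewrite -(size_map (fun S : {set V} => #|S|)) addn1.
rewrite -(size_iota 0 (#|U|.+1)); apply: uniq_leq_size => // k /mapP [X hX ->].
rewrite mem_iota /= ltnS; apply: subset_leq_card.
by case: (hs _ hX).
Qed.

Definition ratio (S T : {set V}) := (KK S - KK T) / (PS pi T - PS pi S).

Definition nxt x0 := \big[Order.min/dd]_(T : {set V} |
   (T \subset U) && (PS pi (M x0) < PS pi T)) ratio (M x0) T.

Lemma ratio_gt x0 (T : {set V}) : x0 <= dd -> T \subset U ->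
  PS pi (M x0) < PS pi T -> x0 < ratio (M x0) T.
Proof.
move=> hx hT hP; have oS := M_opt hx.
have hlt : GG T x0 < GG (M x0) x0.
  rewrite ltNge; apply/negP => hle.
  have oT : opt T x0.
    apply: opt_of => // T' hT'; apply: le_trans hle; exact: opt_ge oS hT'.
  have := PS_mono (M_max oT); rewrite leNgt hP //.
rewrite /ratio ltr_pdivlMr ?subr_gt0 //; move: hlt; rewrite !G_aff; lra.
Qed.

Lemma nxt_gt x0 : x0 < dd -> x0 < nxt x0.
Proof.
move=> hx; rewrite /nxt; apply: (big_ind (fun y => x0 < y)) => //.
  by move=> y1 y2 h1 h2; rewrite lt_min h1 h2.
by move=> T /andP [hT hP]; apply: ratio_gt => //; apply: ltW.
Qed.

Lemma nxt_le x0 : nxt x0 <= dd.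
Proof.
rewrite /nxt; apply: (big_rec (fun y => y <= dd)) => // T y _ h.
by rewrite ge_min h orbT.
Qed.

Lemma nxt_le_ratio x0 (T : {set V}) : T \subset U -> PS pi (M x0) < PS pi T ->
  nxt x0 <= ratio (M x0) T.
Proof.
by move=> hT hP; rewrite /nxt (bigD1 T) ?hT ?hP //= ge_min lexx.
Qed.

Lemma nxt_opt x0 x : x0 <= dd -> x0 <= x -> x <= nxt x0 -> opt (M x0) x.
Proof.
move=> hx h1 h2; have oS := M_opt hx; have [hS _] := oS.
apply: opt_of => // T hT.
case: (ltP (PS pi (M x0)) (PS pi T)) => hP.
  have := le_trans h2 (nxt_le_ratio hT hP).
  rewrite /ratio ler_pdivlMr ?subr_gt0 // !G_aff; lra.
have h3 := opt_ge oS hT.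
have hm : 0 <= (x - x0) * (PS pi (M x0) - PS pi T).
  by apply: mulr_ge0; rewrite subr_ge0.
move: h3; rewrite !G_aff; lra.
Qed.

Lemma nxt_cases x0 : nxt x0 = dd \/
  exists2 T : {set V}, (T \subset U) && (PS pi (M x0) < PS pi T) &
     nxt x0 = ratio (M x0) T.
Proof.
rewrite /nxt; apply: (big_rec (fun y => y = dd \/ exists2 T : {set V},
   (T \subset U) && (PS pi (M x0) < PS pi T) & y = ratio (M x0) T)); first by left.
move=> T y hT hy; case: (leP (ratio (M x0) T) y) => h.
  by right; exists T => //; rewrite min_l.
by [].
Qed.

Lemma nxt_strict x0 : x0 < dd -> nxt x0 < dd -> M x0 \proper M (nxt x0).
Proof.
move=> hx hn; have hx' := ltW hx.
have hgt := nxt_gt hx.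
have oSn : opt (M x0) (nxt x0) by apply: nxt_opt => //; exact: ltW.
have sub : M x0 \subset M (nxt x0) by apply: M_max.
case: (nxt_cases x0) => [e|[T /andP [hT hP] e]]; first by move: hn; rewrite e ltxx.
have eq : GG T (nxt x0) = GG (M x0) (nxt x0).
  rewrite !G_aff e /ratio.
  have hz : PS pi T - PS pi (M x0) != 0 by rewrite subr_eq0 eq_sym (lt_eqF hP).
  set z := PS pi T - PS pi (M x0).
  have : (KK (M x0) - KK T) / z * z = KK (M x0) - KK T by rewrite divfK.
  rewrite /z; lra.
have oT : opt T (nxt x0).
  by apply: opt_of => // T' hT'; rewrite eq; apply: opt_ge.
have := PS_mono (M_max oT) => hP2.
rewrite properEneq sub andbT; apply/eqP => e2.
by move: hP2; rewrite -e2 leNgt hP.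
Qed.

Definition ex_build x0 :=
  exists (tt : seq R) (Ss : seq {set V}),
    [/\ path <%R x0 (rcons tt dd), size Ss = (size tt).+1,
      (forall i, (i < size Ss)%N -> forall x,
         nth 0 (x0 :: rcons tt dd) i <= x <= nth 0 (x0 :: rcons tt dd) i.+1 ->
         opt (nth set0 Ss i) x),
      (forall i, (i.+1 < size Ss)%N -> nth set0 Ss i \subset nth set0 Ss i.+1) &
      [/\ nth set0 Ss 0 = M x0,
      (size tt <= #|U| - #|M x0|)%N &
      (forall x, x0 < x < dd -> x \notin tt -> exists i, (i < size Ss)%N /\
         nth 0 (x0 :: rcons tt dd) i < x < nth 0 (x0 :: rcons tt dd) i.+1)]].

Lemma build_step x0 :
  (forall x1, x0 < x1 -> x1 < dd -> (#|M x0| < #|M x1|)%N -> ex_build x1) ->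
  x0 < dd -> ex_build x0.
Proof.
move=> IH hx; have hx' := ltW hx; have hgt := nxt_gt hx.
case: (ltP (nxt x0) dd) => hn; last first.
  have e : nxt x0 = dd by apply: le_anti; rewrite hn nxt_le.
  exists [::], [:: M x0]; split.
  - by rewrite /= hx.
  - by [].
  - case=> // _ x hxx; apply: nxt_opt => //; case/andP: hxx => // _ h; rewrite e; exact: h.
  - by [].
  split => //.
  by move=> x hxx _; exists 0%N.
have hp := nxt_strict hx hn.
have [tt [Ss [P1 P2 P3 P4 [P5 P6 P7]]]] := IH _ hgt hn (proper_card hp).
exists (nxt x0 :: tt), (M x0 :: Ss); split => /=.
- by rewrite hgt.
- by rewrite P2.
- case=> [_ x hxx|i hi x hxx]; last exact: P3.
  apply: nxt_opt => //; by case/andP: hxx.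
- case=> [_|i hi]; last exact: P4.
  by rewrite P5; apply: proper_sub.
split.
- by [].
- have h1 := proper_card hp.
  have h2 : (#|M (nxt x0)| <= #|U|)%N.
    by apply: subset_leq_card; case: (M_opt (nxt_le x0)).
  move: P6 h1 h2; lia.
- move=> x /andP [h1 h2]; rewrite inE negb_or => /andP [hne hnt].
  case: (ltgtP x (nxt x0)) => h3.
  + by exists 0%N; rewrite h1 h3.
  + have [i [hi hii]] := P7 x (introT andP (conj h3 h2)) hnt.
    by exists i.+1.
  + by move: hne; rewrite h3 eqxx.
Qed.

Lemma build k x0 : (#|U| - #|M x0| <= k)%N -> x0 < dd -> ex_build x0.
Proof.
elim: k x0 => [|k IHk] x0 hk; apply: build_step => x1 h1 h2 hc.
  have : (#|M x1| <= #|U|)%N.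
    by apply: subset_leq_card; case: (M_opt (ltW h2)).
  move: hk hc; lia.
apply: IHk => //.
have : (#|M x1| <= #|U|)%N.
  by apply: subset_leq_card; case: (M_opt (ltW h2)).
move: hk hc; lia.
Qed.

Lemma opt_affine (S : {set V}) b c :
  (forall x, b <= x <= c -> opt S x) -> affine_on ff b c.
Proof.
move=> H; exists (KK S), (PS pi S) => y hy; case: (H y hy) => _ <-.
by rewrite G_aff mulrC.
Qed.

Lemma main :
  let f := fAI r par w pi p a I in
  let n := #|VAI par a I| in
  let d := dist r par w a in
  (forall s : seq R, uniq s -> (forall x, x \in s -> corner f 0 d x) ->
     (size s <= n)%N) /\
  (exists (t : seq R) (Ss : seq {set V}),
     [/\ (0 < size t)%N, head 0 t = 0, last 0 t = d & sorted <%R t] /\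
     (size t <= n + 2)%N /\ size Ss = (size t).-1 /\
     (forall i, (i < size Ss)%N ->
        affine_on f (nth 0 t i) (nth 0 t i.+1) /\
        forall x, nth 0 t i <= x <= nth 0 t i.+1 ->
          optimal r par w pi p a I (nth set0 Ss i) x) /\
     (forall i, (i.+1 < size Ss)%N -> nth set0 Ss i \subset nth set0 Ss i.+1)) /\
  (forall S1 S2, matryoshka r par w pi p a I S1 -> matryoshka r par w pi p a I S2 ->
     S1 \subset S2 \/ S2 \subset S1) /\
  (forall s : seq {set V}, uniq s ->
     (forall S, S \in s -> matryoshka r par w pi p a I S) -> (size s <= n + 1)%N).
Proof.
move=> f n d.
have d0 : 0 <= d by rewrite /d /dist; apply: sumr_ge0 => u _; exact: Hw.
have M3 : forall S1 S2, matryoshka r par w pi p a I S1 ->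
   matryoshka r par w pi p a I S2 -> S1 \subset S2 \/ S2 \subset S1.
  by move=> S1 S2; apply: matr_chain.
case: (ltP 0 d) => hd; last first.
  have e : d = 0 by apply: le_anti; rewrite hd d0.
  split.
    case=> [|y s'] //= _ hs; have [/andP [h1 h2] _] := hs y (mem_head _ _).
    by move: h1 h2; rewrite e; lra.
  split; last by split => //; exact: matr_count.
  exists [:: 0], [::]; split => //=.
  by split; [rewrite addn2 | split => //; split => // i].
have [tt [Ss [P1 P2 P3 P4 [P5 P6 P7]]]] := build (leqnn _) hd.
have hsz : (size tt <= n)%N by apply: leq_trans P6 (leq_subr _ _).
split.
  move=> s us hs; apply: leq_trans hsz; apply: uniq_leq_size => // x hx.
  have [/andP [h0 hdx] hna] := hs x hx.
  apply/negPn/negP => hnt.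
  have [i [hi /andP [l u]]] := P7 x (introT andP (conj h0 hdx)) hnt.
  apply: hna.
  set ti := nth 0 (0 :: rcons tt d) i in l.
  set tj := nth 0 (0 :: rcons tt d) i.+1 in u.
  exists (Order.min (x - ti) (tj - x)); split.
    by rewrite lt_min !subr_gt0 l u.
  have e1 : Order.min (x - ti) (tj - x) <= x - ti by rewrite ge_min lexx.
  have e2 : Order.min (x - ti) (tj - x) <= tj - x by rewrite ge_min lexx orbT.
  have [al [be hab]] := opt_affine (P3 i hi).
  exists al, be => y /andP [y1 y2]; apply: hab.
  rewrite -/ti -/tj; apply/andP; split; lra.
split.
  exists (0 :: rcons tt d), Ss; split.
    by split => //=; rewrite last_rcons.
  split; first by rewrite /= size_rcons; move: hsz; lia.
  split; first by rewrite /= size_rcons.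
  split => // i hi; split; first exact: opt_affine (P3 i hi).
  exact: P3.
by split => //; exact: matr_count.
Qed.

End P5.

Unset Implicit Arguments.

Theorem proposition5 (R : realFieldType) (V : finType) (r : V) (par : V -> V)
  (w pi p : V -> R)
  (Htree : is_rooted_tree r par)
  (Hw : forall v, 0 <= w v)
  (Hpi : forall v, 0 < pi v <= 1)
  (a : V) (I : {set option V})
  (HI : forall c, Some c \in I -> c \in children r par a) :
  let f := fAI r par w pi p a I in
  let n := #|VAI par a I| in
  let d := dist r par w a in
  (forall s : seq R, uniq s -> (forall x, x \in s -> corner f 0 d x) ->
     (size s <= n)%N) /\
  (exists (t : seq R) (Ss : seq {set V}),
     [/\ (0 < size t)%N, head 0 t = 0, last 0 t = d & sorted <%R t] /\
     (size t <= n + 2)%N /\ size Ss = (size t).-1 /\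
     (forall i, (i < size Ss)%N ->
        affine_on f (nth 0 t i) (nth 0 t i.+1) /\
        forall x, nth 0 t i <= x <= nth 0 t i.+1 ->
          optimal r par w pi p a I (nth set0 Ss i) x) /\
     (forall i, (i.+1 < size Ss)%N -> nth set0 Ss i \subset nth set0 Ss i.+1)) /\
  (forall S1 S2, matryoshka r par w pi p a I S1 -> matryoshka r par w pi p a I S2 ->
     S1 \subset S2 \/ S2 \subset S1) /\
  (forall s : seq {set V}, uniq s ->
     (forall S, S \in s -> matryoshka r par w pi p a I S) -> (size s <= n + 1)%N).
Proof. exact: (@main R V r par w pi p Hw Hpi a I HI). Qed.
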